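(* Let $R$ be a commutative Noetherian ring with $1$ in which linear equations are solvable, let $>$ be a local degree ordering on $\operatorname{Mon}_n$, let $I$ be an ideal of $R[x_1,\ldots,x_n]$, and let $G$ be a standard basis (respectively a strong standard basis) of $I$ with respect to $>$. Then $G$ is a standard basis (respectively a strong standard basis) of $I\,R[[x_1,\ldots,x_n]]$.
   Context: Linear equations are solvable in $R$ means: for any $a,a_1,\ldots,a_m\in R$ there are algorithms to compute generators of $\{(b_1,\ldots,b_m)\in R^m:\sum a_ib_i=0\}$, to decide whether $a\in\langle a_1,\ldots,a_m\rangle$, and if so to compute $b_i$ with $a=\sum b_ia_i$. A monomial ordering is a total ordering $>$ on $\operatorname{Mon}_n=\{x^\alpha\}$ compatible with multiplication; it is local if $x^\alpha<1$ for all $\alpha\neq0$, and a local degree ordering if it is local and $x^\alpha>x^\beta$ implies $\deg x^\alpha\le\deg x^\beta$. For a nonzero polynomial or power series $f=\sum_{v\ge0}a_vx^{\alpha_v}$ with $a_v\neq0$ and $x^{\alpha_0}>x^{\alpha_1}>\cdots$, $LM(f)=x^{\alpha_0}$, $LC(f)=a_0$, $LT(f)=a_0x^{\alpha_0}$. $S_>=\{u\in R[x_1,\ldots,x_n]\setminus\{0\}:LT(u)=1\}$, $R[x_1,\ldots,x_n]_>=S_>^{-1}R[x_1,\ldots,x_n]$, which (for local $>$) is naturally contained in $R[[x_1,\ldots,x_n]]$; for $f\in R[x_1,\ldots,x_n]_>$, $LT(f):=LT(uf)$ for $u\in S_>$ with $uf$ a polynomial. For a set $G$, $L(G)$ is the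 ideal of $R[x_1,\ldots,x_n]$ generated by $\{LT(g):g\in G\}$. A standard basis of an ideal $I$ of $R[x_1,\ldots,x_n]$ means a standard basis of $I\,R[x_1,\ldots,x_n]_>$. For an ideal $J$ (of $R[x_1,\ldots,x_n]_>$ or of $R[[x_1,\ldots,x_n]]$), a finite set $G=\{g_1,\ldots,g_t\}$ is a standard basis of $J$ if $G\subseteq J$ and $L(G)=L(J)$, and a strong standard basis if $G\subseteq J$ and for every $f\in J\setminus\{0\}$ there is $i$ with $LT(g_i)$ dividing $LT(f)$ (i.e. $LT(f)=c\,x^\gamma LT(g_i)$ for some $c\in R$, $x^\gamma\in\operatorname{Mon}_n$). *)

(* Defs.v *)
From HB Require Import structures.
From mathcomp Require Import all_boot all_order all_algebra.
From mathcomp Require Import mpoly.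
From Stdlib Require List.
Set Implicit Arguments. Unset Strict Implicit. Unset Printing Implicit Defensive.
Import GRing.Theory.
Local Open Scope ring_scope.

Definition ideal_gen (T : comNzRingType) (S : T -> Prop) (x : T) : Prop :=
  exists s : seq (T * T), (forall y, y \in s -> S y.2) /\
    x = \sum_(y <- s) y.1 * y.2.

Definition is_ideal (T : comNzRingType) (I : T -> Prop) : Prop :=
  [/\ I 0, (forall x y, I x -> I y -> I (x + y)) & (forall r x, I x -> I (r * x))].

Definition noetherian (T : comNzRingType) : Prop :=
  forall I : T -> Prop, is_ideal I ->
    exists s : seq T, forall x, I x <-> ideal_gen (fun y => y \in s) x.

(* "Linear equations are solvable in R": algorithms (Rocq functions) that
   (1) compute generators of the syzygy module of a_1..a_m,
   (2) decide ideal membership a \in <a_1..a_m>,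
   (3) compute a representation a = sum b_i a_i when it exists. *)
Record lin_eq_solvable (R : comNzRingType) := LinEqSolvable {
  les_syz : forall m : nat, ('I_m -> R) -> {k : nat & 'I_k -> 'I_m -> R};
  les_syzP : forall m (a : 'I_m -> R),
     (forall j, \sum_i a i * projT2 (les_syz a) j i = 0) /\
     (forall b : 'I_m -> R, \sum_i a i * b i = 0 ->
        exists c : 'I_(projT1 (les_syz a)) -> R,
          forall i, b i = \sum_j c j * projT2 (les_syz a) j i);
  les_mem : R -> forall m : nat, ('I_m -> R) -> bool;
  les_memP : forall x m (a : 'I_m -> R),
     les_mem x a = true <-> exists b : 'I_m -> R, x = \sum_i b i * a i;
  les_coef : R -> forall m : nat, ('I_m -> R) -> ('I_m -> R);
  les_coefP : forall x m (a : 'I_m -> R),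
     les_mem x a = true -> x = \sum_i les_coef x a i * a i
}.

(* [lt a b] means x^a < x^b. *)
Definition monomial_ordering n (lt : rel 'X_{1..n}) : Prop :=
  [/\ (forall a, ~~ lt a a),
      (forall a b c, lt a b -> lt b c -> lt a c),
      (forall a b, a != b -> lt a b || lt b a) &
      (forall a b c, lt a b -> lt (a + c)%MM (b + c)%MM)].

Definition local_ordering n (lt : rel 'X_{1..n}) : Prop :=
  monomial_ordering lt /\ forall a : 'X_{1..n}, a != 0%MM -> lt a 0%MM.

Definition local_degree_ordering n (lt : rel 'X_{1..n}) : Prop :=
  local_ordering lt /\ forall a b, lt b a -> (mdeg a <= mdeg b)%N.

Definition series (R : comNzRingType) n := 'X_{1..n} -> R.

Definition ser_of_poly (R : comNzRingType) n (p : {mpoly R[n]}) : series R n :=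
  fun m => p@_m.

Definition ser_add (R : comNzRingType) n (f g : series R n) : series R n :=
  fun m => f m + g m.

Definition ser0 (R : comNzRingType) n : series R n := fun _ => 0.

Definition ser_mul (R : comNzRingType) n (f g : series R n) : series R n :=
  fun m => \sum_(p : 'X_{1..n < (mdeg m).+1} * 'X_{1..n < (mdeg m).+1}
                 | ((p.1 : 'X_{1..n}) + p.2)%MM == m)
             f p.1 * g p.2.

Definition ser_nz (R : comNzRingType) n (f : series R n) : Prop :=
  exists m, f m != 0.

Definition is_LT (R : comNzRingType) n (lt : rel 'X_{1..n}) (f : series R n)
    (c : R) (m : 'X_{1..n}) : Prop :=
  [/\ f m = c, c != 0 & forall m', f m' != 0 -> m' = m \/ lt m' m].

Definition L_of_seq (R : comNzRingType) n (lt : rel 'X_{1..n}) (G : seq (series R n))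
    : {mpoly R[n]} -> Prop :=
  ideal_gen (fun t : {mpoly R[n]} => exists g c m,
     [/\ List.In g G, is_LT lt g c m & t = c *: 'X_[m]]).

Definition L_of_set (R : comNzRingType) n (lt : rel 'X_{1..n}) (J : series R n -> Prop)
    : {mpoly R[n]} -> Prop :=
  ideal_gen (fun t : {mpoly R[n]} => exists f c m,
     [/\ J f, is_LT lt f c m & t = c *: 'X_[m]]).

Definition standard_basis (R : comNzRingType) n (lt : rel 'X_{1..n})
    (J : series R n -> Prop) (G : seq (series R n)) : Prop :=
  (forall g, List.In g G -> J g) /\
  (forall p, L_of_seq lt G p <-> L_of_set lt J p).

Definition strong_standard_basis (R : comNzRingType) n (lt : rel 'X_{1..n})
    (J : series R n -> Prop) (G : seq (series R n)) : Prop :=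
  (forall g, List.In g G -> J g) /\
  (forall f, J f -> ser_nz f -> exists g cf mf cg mg,
     [/\ List.In g G, is_LT lt f cf mf, is_LT lt g cg mg &
         exists (c : R) (gam : 'X_{1..n}), cf = c * cg /\ mf = (gam + mg)%MM]).

Definition in_S (R : comNzRingType) n (lt : rel 'X_{1..n}) (u : {mpoly R[n]}) : Prop :=
  is_LT lt (ser_of_poly u) 1 0%MM.

(* I R[x]_> = { f/u : f in I, u in S_> }, viewed inside R[[x]] (lt local):
   g = f/u  iff  u*g = f. *)
Definition loc_ideal (R : comNzRingType) n (lt : rel 'X_{1..n}) (I : {mpoly R[n]} -> Prop)
    (g : series R n) : Prop :=
  exists u f : {mpoly R[n]}, [/\ in_S lt u, I f &
     ser_mul (ser_of_poly u) g = ser_of_poly f].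

Definition ps_ideal (R : comNzRingType) n (I : {mpoly R[n]} -> Prop)
    (h : series R n) : Prop :=
  exists s : seq (series R n * {mpoly R[n]}), (forall y, List.In y s -> I y.2) /\
    h = foldr (fun y acc => ser_add (ser_mul y.1 (ser_of_poly y.2)) acc) (@ser0 R n) s.

(* Main.v *)
Require Import Defs.
From HB Require Import structures.
From mathcomp Require Import all_boot all_order all_algebra.
From mathcomp Require Import mpoly.
From Stdlib Require Import FunctionalExtensionality.
From mathcomp Require Import zify.
Set Implicit Arguments. Unset Strict Implicit. Unset Printing Implicit Defensive.
Import GRing.Theory.
Local Open Scope ring_scope.


Section S.
Variables (R : comNzRingType) (n : nat).
Implicit Types (p q : {mpoly R[n]}) (f g : series R n).

Definition agree (d : nat) (f : series R n) p :=
  forall m : 'X_{1..n}, (mdeg m <= d)%N -> f m = p@_m.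

Lemma agree_le d d' f p : (d' <= d)%N -> agree d f p -> agree d' f p.
Proof. by move=> h a m hm; apply: a; apply: leq_trans hm h. Qed.

Lemma coefM_agree p p' q q' (m : 'X_{1..n}) :
  agree (mdeg m) (ser_of_poly p) p' -> agree (mdeg m) (ser_of_poly q) q' ->
  (p * q)@_m = (p' * q')@_m.
Proof.
move=> hp hq; rewrite !mcoeffM; apply: eq_bigr => k _.
have h1 := hp k.1 (bmdeg k.1); have h2 := hq k.2 (bmdeg k.2).
by rewrite /ser_of_poly in h1 h2; rewrite -h1 -h2.
Qed.

Lemma ser_mulE f g p q (m : 'X_{1..n}) :
  agree (mdeg m) f p -> agree (mdeg m) g q -> ser_mul f g m = (p * q)@_m.
Proof.
move=> hp hq; rewrite mcoeffM /ser_mul; apply: eq_big.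
  by move=> k; rewrite eq_sym.
move=> k _; by rewrite (hp k.1 (bmdeg k.1)) (hq k.2 (bmdeg k.2)).
Qed.

Definition trunc d f : {mpoly R[n]} := \sum_(k : 'X_{1..n < d.+1}) f k *: 'X_[k].

Lemma trunc_agree d f : agree d f (trunc d f).
Proof.
move=> m hm; rewrite /trunc raddf_sum /=.
have hm' : (mdeg m < d.+1)%N by [].
rewrite (bigD1 (BMultinom hm')) //= mcoeffZ mcoeffX eqxx mulr1 big1 ?addr0 //.
move=> k hk; rewrite mcoeffZ mcoeffX; case: eqP => [e|]; last by rewrite mulr0.
by case/negP: hk; apply/eqP; apply: val_inj.
Qed.
End S.



Section S2.
Variables (R : comNzRingType) (n : nat).
Implicit Types (p q w : {mpoly R[n]}) (f g : series R n).

Lemma pow_low w : w@_0%MM = 0 -> forall k (m : 'X_{1..n}), (mdeg m < k)%N -> (w ^+ k)@_m = 0.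
Proof.
move=> w0; elim=> [//|k IH] m hm.
rewrite exprS mcoeffM big1 // => kk /eqP e.
have [z|nz] := eqVneq (kk.1 : 'X_{1..n}) 0%MM; first by rewrite z w0 mul0r.
rewrite IH ?mulr0 //.
have : (0 < mdeg kk.1)%N by rewrite lt0n mdeg_eq0.
have := congr1 mdeg e; rewrite mdegD; move: hm.
move: (mdeg m) (mdeg kk.1) (mdeg kk.2) => a b c; lia.
Qed.

Lemma geom w N : (\sum_(k < N) w ^+ k) * (1 - w) = 1 - w ^+ N.
Proof.
elim: N => [|N IH]; first by rewrite big_ord0 mul0r expr0 subrr.
rewrite big_ord_recr /= mulrDl IH exprS.
rewrite mulrBr mulr1 [w * _]mulrC. rewrite addrA subrK. done.
Qed.

Lemma agree_refl d p : agree d (ser_of_poly p) p.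
Proof. by []. Qed.

Lemma loc_ps (I : {mpoly R[n]} -> Prop) (u f : {mpoly R[n]}) (g : series R n) :
  ser_of_poly u 0%MM = 1 -> I f -> ser_mul (ser_of_poly u) g = ser_of_poly f ->
  ps_ideal I g.
Proof.
move=> u0 If e.
pose w := 1 - u.
have w0 : w@_0%MM = 0 by rewrite mcoeffB mcoeff1 eqxx; rewrite /ser_of_poly in u0; rewrite u0 subrr.
pose v : series R n := fun m => (\sum_(k < (mdeg m).+1) w ^+ k)@_m.
have vD : forall D (m : 'X_{1..n}), (mdeg m <= D)%N -> v m = (\sum_(k < D.+1) w ^+ k)@_m.
  elim=> [|D IH] m hm.
    by rewrite /v; move: hm; rewrite leqn0 => /eqP ->.
  move: hm; rewrite leq_eqVlt => /orP [/eqP <-|hm]; first by [].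
  rewrite IH // [in RHS]big_ord_recr /= mcoeffD (pow_low w0) ?addr0 //.
exists [:: (v, f)]; split; first by move=> y [<-|[]].
apply: functional_extensionality => m /=.
rewrite /ser_add /ser0 addr0.
set d := mdeg m.
have h1 : agree d v (\sum_(k < d.+1) w ^+ k) by move=> m' hm'; apply: vD.
rewrite (ser_mulE h1 (@agree_refl d f)).
have h2 : agree d (ser_of_poly f) (u * trunc d g).
  move=> m' hm'; rewrite -e; apply: ser_mulE; first exact: agree_refl.
  exact: agree_le hm' (@trunc_agree _ _ d g).
have hu : u = 1 - w by rewrite /w opprB addrCA subrr addr0.
rewrite (coefM_agree (@agree_refl _ _) h2) mulrA [in X in X * trunc _ _]hu geom mulrBl mul1r mcoeffB.
rewrite -(@trunc_agree _ _ d g) //.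
have h3 : agree d (ser_of_poly (w ^+ d.+1)) 0.
  move=> m' hm'; rewrite mcoeff0 /ser_of_poly (pow_low w0) //.
rewrite (coefM_agree h3 (@agree_refl _ (trunc d g))) mul0r mcoeff0 subr0 //.
Qed.
End S2.



Section S3.
Variables (R : comNzRingType) (n : nat) (lt : rel 'X_{1..n}).
Hypothesis hlt : local_degree_ordering lt.

Lemma lt_irr a : ~~ lt a a.
Proof. by case: hlt => [[[h _ _ _] _] _]. Qed.
Lemma lt_trans a b c : lt a b -> lt b c -> lt a c.
Proof. by case: hlt => [[[_ h _ _] _] _]; apply: h. Qed.
Lemma lt_tot a b : a != b -> lt a b || lt b a.
Proof. by case: hlt => [[[_ _ h _] _] _]; apply: h. Qed.
Lemma lt_deg a b : lt b a -> (mdeg a <= mdeg b)%N.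
Proof. by case: hlt => [_ h]; apply: h. Qed.

Lemma deg_lt a b : (mdeg b < mdeg a)%N -> lt a b.
Proof.
move=> h; have : a != b by apply/eqP => e; move: h; rewrite e ltnn.
move/lt_tot/orP => [//|/lt_deg]; rewrite leqNgt h //.
Qed.

Lemma max_seq (s : seq 'X_{1..n}) a :
  exists2 x, x \in a :: s & forall y, y \in a :: s -> y = x \/ lt y x.
Proof.
elim: s a => [|b s IH] a.
  by exists a => [|y]; rewrite ?inE // => /eqP ->; left.
have [x xin xmax] := IH b.
have [e|ne] := eqVneq a x.
  exists x; first by rewrite inE xin orbT.
  by move=> y; rewrite inE => /orP [/eqP ->|/xmax]; [left|].
case/orP: (lt_tot ne) => h.
  exists x; first by rewrite inE xin orbT.
  by move=> y; rewrite inE => /orP [/eqP ->|/xmax]; [right|].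
exists a; first by rewrite inE eqxx.
move=> y; rewrite inE => /orP [/eqP ->|/xmax [->|hy]]; [left|right|right] => //.
exact: lt_trans hy h.
Qed.

Lemma LT_exists (f : series R n) : ser_nz f -> exists c m, is_LT lt f c m.
Proof.
case=> m0 hm0; set d := mdeg m0.
pose s := [seq m <- map val (enum (predT : pred 'X_{1..n < d.+1})) | f m != 0].
have m0s : m0 \in s.
  rewrite mem_filter hm0 /=.
  have hb : (mdeg m0 < d.+1)%N by [].
  by apply/mapP; exists (BMultinom hb); rewrite ?mem_enum.
have [x xs xmax] : exists2 x, x \in s & forall y, y \in s -> y = x \/ lt y x.
  move: m0s; case: s => [//|a s'] _; exact: max_seq.
have : f x != 0 /\ (mdeg x <= d)%N.
  move: xs; rewrite mem_filter => /andP [-> /mapP [k _ ->]]; split=> //.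
  exact: (bmdeg k).
case=> fx xd.
exists (f x), x; split=> // m' hm'.
have [hd|hd] := leqP (mdeg m') d.
  apply: xmax; rewrite mem_filter hm' /=.
  have hb : (mdeg m' < d.+1)%N by [].
  by apply/mapP; exists (BMultinom hb); rewrite ?mem_enum.
right; apply: deg_lt; exact: leq_ltn_trans xd hd.
Qed.

Lemma LT_uniq (f : series R n) c m c' m' :
  is_LT lt f c m -> is_LT lt f c' m' -> c = c' /\ m = m'.
Proof.
move=> [f1 c1 h1] [f2 c2 h2].
have em : m = m'.
  have := h2 m; rewrite f1 => /(_ c1) [//|l1].
  have := h1 m'; rewrite f2 => /(_ c2) [//|l2].
  by move: (lt_irr m); rewrite (lt_trans l1 l2).
by subst; split.
Qed.

Variable (I : {mpoly R[n]} -> Prop).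
Hypothesis hI : is_ideal I.

Lemma ps_trunc (f : series R n) : ps_ideal I f -> forall d, exists p, I p /\ agree d f p.
Proof.
case=> s [sI ->] d; elim: s sI => [|[h q] s IH] sI /=.
  by exists 0; case: hI => I0 _ _; split=> // m _; rewrite mcoeff0.
have [p [Ip ap]] := IH (fun y hy => sI y (or_intror hy)).
have Iq : I q by apply: (sI (h, q)); left.
case: hI => _ IA IM.
exists (trunc d h * q + p); split; first by apply: IA => //; apply: IM.
move=> m hm; rewrite /ser_add mcoeffD ap // (ser_mulE (p := trunc d h) (q := q)) //.
  exact: agree_le hm (@trunc_agree _ _ d h).
Qed.

Lemma ps_LT (f : series R n) c m : ps_ideal I f -> is_LT lt f c m ->
  exists p, I p /\ is_LT lt (ser_of_poly p) c m.
Proof.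
move=> hf [f1 c1 h1]; have [p [Ip ap]] := ps_trunc hf (mdeg m).
exists p; split=> //; split => //.
  by rewrite /ser_of_poly -ap.
move=> m' hm'; have [hd|hd] := leqP (mdeg m') (mdeg m).
  by apply: h1; rewrite ap.
by right; apply: deg_lt.
Qed.

Lemma I_loc p : I p -> loc_ideal lt I (ser_of_poly p).
Proof.
move=> Ip; exists 1, p; split=> //.
  split; first by rewrite /ser_of_poly mcoeff1 eqxx.
    exact: oner_neq0.
  move=> m'; rewrite /ser_of_poly mcoeff1; have [->|_] := eqVneq m' 0%MM; [by left | by rewrite /= eqxx].
apply: functional_extensionality => m; rewrite (@ser_mulE R n _ _ 1 p m) ?mul1r //.
Qed.

Lemma loc_ps' g : loc_ideal lt I g -> ps_ideal I g.
Proof. by case=> u [f [[u0 _ _] If e]]; apply: (loc_ps u0 If e). Qed.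

End S3.


Theorem proposition7p1 (R : comNzRingType) (n : nat)
    (hN : noetherian R) (hLES : lin_eq_solvable R)
    (lt : rel 'X_{1..n}) (hlt : local_degree_ordering lt)
    (I : {mpoly R[n]} -> Prop) (hI : is_ideal I)
    (G : seq (series R n)) :
  (standard_basis lt (loc_ideal lt I) G ->
     standard_basis lt (ps_ideal I) G) /\
  (strong_standard_basis lt (loc_ideal lt I) G ->
     strong_standard_basis lt (ps_ideal I) G).
Proof.
split.
- move=> [GJ HL]; split; first by move=> g /GJ; apply: loc_ps'.
  move=> p; rewrite HL; split.
  + case=> s [sS ->]; exists s; split=> // y /sS [f [c [m [Jf LT ->]]]].
    by exists f, c, m; split=> //; apply: (loc_ps' Jf).
  + case=> s [sS ->]; exists s; split=> // y /sS [f [c [m [Jf LT ->]]]].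
    have [q [Iq LTq]] := ps_LT hlt hI Jf LT.
    by exists (ser_of_poly q), c, m; split=> //; apply: I_loc.
- move=> [GJ H]; split; first by move=> g /GJ; apply: loc_ps'.
  move=> f Jf nz.
  have [c [m LT]] := LT_exists hlt nz.
  have [q [Iq LTq]] := ps_LT hlt hI Jf LT.
  have Lq : loc_ideal lt I (ser_of_poly q) by apply: I_loc.
  have nzq : ser_nz (ser_of_poly q) by exists m; case: LTq => -> ->.
  have [g [cf [mf [cg [mg [Gg LTf LTg dv]]]]]] := H _ Lq nzq.
  have [ec em] := LT_uniq hlt LTq LTf.
  subst; exists g, cf, mf, cg, mg; split=> //.
Qed.
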